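(* Let $(x_0,y_0)\neq(x_1,y_1)$ be points in the plane and $\vartheta_0,\vartheta_1$ real angles. Put $\Delta x=x_1-x_0$, $\Delta y=y_1-y_0$, $r=\sqrt{\Delta x^2+\Delta y^2}>0$, let $\varphi$ be an angle with $\Delta x=r\cos\varphi$, $\Delta y=r\sin\varphi$, and set $\Delta\vartheta=\vartheta_1-\vartheta_0$, $\Delta\varphi=\vartheta_0-\varphi$. Define, for $L>0$ and $A\in\mathbb{R}$, $$\mathbf{G}(L,A)=\begin{pmatrix}\Delta x-L\int_0^1\cos\big(A\tau^2+(\Delta\vartheta-A)\tau+\vartheta_0\big)\,\mathrm{d}\tau\\ \Delta y-L\int_0^1\sin\big(A\tau^2+(\Delta\vartheta-A)\tau+\vartheta_0\big)\,\mathrm{d}\tau\end{pmatrix},$$ $$g(A)=\int_0^1\sin\big(A\tau^2+(\Delta\vartheta-A)\tau+\Delta\varphi\big)\,\mathrm{d}\tau,\qquad h(A)=\int_0^1\cos\big(A\tau^2+(\Delta\vartheta-A)\tau+\Delta\varphi\big)\,\mathrm{d}\tau .$$ Then the solutions $(L,A)$ (with $L>0$) of $\mathbf{G}(L,A)=\mathbf{0}$ are given by $$L=\frac{\sqrt{\Delta x^2+\Delta y^2}}{h(A)},$$ where $A$ is a root of $g$ (and for such $A$ one has $h(A)\neq 0$, so $L$ is well defined); the corresponding clothoid parameters are $$\kappa=\frac{\Delta\vartheta-A}{L},\qquad \kappa'=\frac{2A}{L^2}.$$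
   Context: A clothoid with starting point $(x_0,y_0)$, initial angle $\vartheta_0$, curvature $\kappa$ and curvature derivative $\kappa'$ is the curve $x(s)=x_0+\int_0^s\cos(\tfrac12\kappa'\tau^2+\kappa\tau+\vartheta_0)\,\mathrm{d}\tau$, $y(s)=y_0+\int_0^s\sin(\tfrac12\kappa'\tau^2+\kappa\tau+\vartheta_0)\,\mathrm{d}\tau$, $s$ being arc length; its angle at arc length $s$ is $\tfrac12\kappa's^2+\kappa s+\vartheta_0$. The system $\mathbf{G}(L,A)=\mathbf{0}$ expresses that such a clothoid of length $L$, with $\kappa=(\Delta\vartheta-A)/L$ and $\kappa'=2A/L^2$, reaches $(x_1,y_1)$ at $s=L$ (its final angle then automatically equals $\vartheta_1$). *)

(* Defs.v *)
From Stdlib Require Import Reals.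
From Coquelicot Require Import Coquelicot.
Open Scope R_scope.

Definition clothoid_x (x0 th0 k k' s : R) : R :=
  x0 + RInt (fun t => cos (/2 * k' * t ^ 2 + k * t + th0)) 0 s.
Definition clothoid_y (y0 th0 k k' s : R) : R :=
  y0 + RInt (fun t => sin (/2 * k' * t ^ 2 + k * t + th0)) 0 s.

Definition G (dx dy dth th0 L A : R) : R * R :=
  (dx - L * RInt (fun t => cos (A * t ^ 2 + (dth - A) * t + th0)) 0 1,
   dy - L * RInt (fun t => sin (A * t ^ 2 + (dth - A) * t + th0)) 0 1).

Definition gfun (dth dphi A : R) : R :=
  RInt (fun t => sin (A * t ^ 2 + (dth - A) * t + dphi)) 0 1.
Definition hfun (dth dphi A : R) : R :=
  RInt (fun t => cos (A * t ^ 2 + (dth - A) * t + dphi)) 0 1.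

(* Main.v *)
Require Import Defs.
From Stdlib Require Import Reals Lra.
From Coquelicot Require Import Coquelicot.
Open Scope R_scope.

Lemma exc (A B c : R) a b : ex_RInt (fun t => cos (A * t ^ 2 + B * t + c)) a b.
Proof. apply (@ex_RInt_continuous R_CompleteNormedModule); intros z _. apply (@ex_derive_continuous R_AbsRing R_NormedModule). auto_derive. auto. Qed.
Lemma exs (A B c : R) a b : ex_RInt (fun t => sin (A * t ^ 2 + B * t + c)) a b.
Proof. apply (@ex_RInt_continuous R_CompleteNormedModule); intros z _. apply (@ex_derive_continuous R_AbsRing R_NormedModule). auto_derive. auto. Qed.

Lemma rot_s A B a b :
  RInt (fun t => sin (A * t ^ 2 + B * t + (a - b))) 0 1 =
  cos b * RInt (fun t => sin (A * t ^ 2 + B * t + a)) 0 1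
  - sin b * RInt (fun t => cos (A * t ^ 2 + B * t + a)) 0 1.
Proof.
  rewrite (RInt_ext (V:=R_CompleteNormedModule) _ (fun t => minus (scal (cos b) (sin (A * t ^ 2 + B * t + a)))
              (scal (sin b) (cos (A * t ^ 2 + B * t + a))))).
  2:{ intros x _.
      replace (A * x ^ 2 + B * x + (a - b)) with ((A * x ^ 2 + B * x + a) - b) by ring.
      rewrite sin_minus. change (minus ?u ?v) with (u - v). change (scal ?u ?v) with (u * v). match goal with |- ?l = ?r => change (@eq R l r) end; ring. }
  rewrite (RInt_minus (V:=R_CompleteNormedModule)).
  2: apply (ex_RInt_scal (V:=R_CompleteNormedModule)); apply exs.
  2: apply (ex_RInt_scal (V:=R_CompleteNormedModule)); apply exc.
  rewrite (RInt_scal (V:=R_CompleteNormedModule)) by apply exs.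
  rewrite (RInt_scal (V:=R_CompleteNormedModule)) by apply exc. reflexivity.
Qed.

Lemma rot_c A B a b :
  RInt (fun t => cos (A * t ^ 2 + B * t + (a - b))) 0 1 =
  cos b * RInt (fun t => cos (A * t ^ 2 + B * t + a)) 0 1
  + sin b * RInt (fun t => sin (A * t ^ 2 + B * t + a)) 0 1.
Proof.
  rewrite (RInt_ext (V:=R_CompleteNormedModule) _ (fun t => plus (scal (cos b) (cos (A * t ^ 2 + B * t + a)))
              (scal (sin b) (sin (A * t ^ 2 + B * t + a))))).
  2:{ intros x _.
      replace (A * x ^ 2 + B * x + (a - b)) with ((A * x ^ 2 + B * x + a) - b) by ring.
      rewrite cos_minus. change (plus ?u ?v) with (u + v). change (scal ?u ?v) with (u * v). match goal with |- ?l = ?r => change (@eq R l r) end; ring. }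
  rewrite (RInt_plus (V:=R_CompleteNormedModule)).
  2: apply (ex_RInt_scal (V:=R_CompleteNormedModule)); apply exc.
  2: apply (ex_RInt_scal (V:=R_CompleteNormedModule)); apply exs.
  rewrite (RInt_scal (V:=R_CompleteNormedModule)) by apply exc.
  rewrite (RInt_scal (V:=R_CompleteNormedModule)) by apply exs. reflexivity.
Qed.

Lemma subst_c L A dth th0 : 0 < L ->
  RInt (fun t => cos (/ 2 * (2 * A / L ^ 2) * t ^ 2 + (dth - A) / L * t + th0)) 0 L
  = L * RInt (fun t => cos (A * t ^ 2 + (dth - A) * t + th0)) 0 1.
Proof.
  intros HL.
  set (f := (fun t => cos (/ 2 * (2 * A / L ^ 2) * t ^ 2 + (dth - A) / L * t + th0))).
  replace (RInt f 0 L) with (RInt f (L * 0 + 0) (L * 1 + 0)) by (f_equal; ring).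
  rewrite <- (RInt_comp_lin (V:=R_CompleteNormedModule)).
  2:{ apply (@ex_RInt_continuous R_CompleteNormedModule); intros z _. apply (@ex_derive_continuous R_AbsRing R_NormedModule). unfold f. auto_derive. auto. }
  rewrite <- (RInt_scal (V:=R_CompleteNormedModule)) by apply exc.
  apply (RInt_ext (V:=R_CompleteNormedModule)). intros x _. unfold f. change (scal ?u ?v) with (u * v). f_equal. f_equal.
  field. lra.
Qed.

Lemma subst_s L A dth th0 : 0 < L ->
  RInt (fun t => sin (/ 2 * (2 * A / L ^ 2) * t ^ 2 + (dth - A) / L * t + th0)) 0 L
  = L * RInt (fun t => sin (A * t ^ 2 + (dth - A) * t + th0)) 0 1.
Proof.
  intros HL.
  set (f := (fun t => sin (/ 2 * (2 * A / L ^ 2) * t ^ 2 + (dth - A) / L * t + th0))).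
  replace (RInt f 0 L) with (RInt f (L * 0 + 0) (L * 1 + 0)) by (f_equal; ring).
  rewrite <- (RInt_comp_lin (V:=R_CompleteNormedModule)).
  2:{ apply (@ex_RInt_continuous R_CompleteNormedModule); intros z _. apply (@ex_derive_continuous R_AbsRing R_NormedModule). unfold f. auto_derive. auto. }
  rewrite <- (RInt_scal (V:=R_CompleteNormedModule)) by apply exs.
  apply (RInt_ext (V:=R_CompleteNormedModule)). intros x _. unfold f. change (scal ?u ?v) with (u * v). f_equal. f_equal.
  field. lra.
Qed.

Theorem lemma3p3 (x0 y0 x1 y1 th0 th1 phi : R) :
  (x0, y0) <> (x1, y1) ->
  let dx := x1 - x0 in
  let dy := y1 - y0 in
  let r := sqrt (dx ^ 2 + dy ^ 2) in
  dx = r * cos phi ->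
  dy = r * sin phi ->
  let dth := th1 - th0 in
  let dphi := th0 - phi in
  (forall L A : R, 0 < L ->
     (G dx dy dth th0 L A = (0, 0) <->
      (gfun dth dphi A = 0 /\ hfun dth dphi A <> 0 /\
       L = sqrt (dx ^ 2 + dy ^ 2) / hfun dth dphi A))) /\
  (forall L A : R, 0 < L -> G dx dy dth th0 L A = (0, 0) ->
     let k := (dth - A) / L in
     let k' := 2 * A / L ^ 2 in
     clothoid_x x0 th0 k k' L = x1 /\ clothoid_y y0 th0 k k' L = y1 /\
     / 2 * k' * L ^ 2 + k * L + th0 = th1).
Proof.
  intros Hne dx dy r Hx Hy dth dphi.
  assert (Hr : 0 < r).
  { unfold r. apply sqrt_lt_R0.
    destruct (Req_dec dx 0) as [E|E].
    - destruct (Req_dec dy 0) as [E'|E'].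
      + exfalso; apply Hne. unfold dx, dy in *. f_equal; lra.
      + destruct (Rdichotomy _ _ E'); nra.
    - destruct (Rdichotomy _ _ E); nra. }
  change (sqrt (dx ^ 2 + dy ^ 2)) with r.
  set (C := (fun A => RInt (fun t => cos (A * t ^ 2 + (dth - A) * t + th0)) 0 1) : R -> R).
  set (S := (fun A => RInt (fun t => sin (A * t ^ 2 + (dth - A) * t + th0)) 0 1) : R -> R).
  assert (Hg : forall A, gfun dth dphi A = cos phi * S A - sin phi * C A).
  { intro A. unfold gfun, dphi, S, C. apply rot_s. }
  assert (Hh : forall A, hfun dth dphi A = cos phi * C A + sin phi * S A).
  { intro A. unfold hfun, dphi, S, C. apply rot_c. }
  assert (HG : forall L A, G dx dy dth th0 L A = (dx - L * C A, dy - L * S A)).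
  { intros; reflexivity. }
  pose proof (sin2_cos2 phi) as Hsc. unfold Rsqr in Hsc.
  split.
  - intros L A HL. rewrite HG, Hg, Hh. split.
    + intros E. injection E as E1 E2.
      assert (HLC : L * C A = r * cos phi) by lra.
      assert (HLS : L * S A = r * sin phi) by lra.
      assert (Hg0 : L * (cos phi * S A - sin phi * C A) = 0) by
        (replace (L * (cos phi * S A - sin phi * C A)) with
           (cos phi * (L * S A) - sin phi * (L * C A)) by ring;
         rewrite HLC, HLS; ring).
      assert (Hh0 : L * (cos phi * C A + sin phi * S A) = r) by
        (replace (L * (cos phi * C A + sin phi * S A)) with
           (cos phi * (L * C A) + sin phi * (L * S A)) by ring;
         rewrite HLC, HLS; nra).
      assert (Hhne : cos phi * C A + sin phi * S A <> 0).
      { intro Z. rewrite Z in Hh0. lra. }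
      split; [|split; [exact Hhne|]].
      * destruct (Rmult_integral _ _ Hg0); lra.
      * rewrite <- Hh0. field. exact Hhne.
    + intros [g0 [hne HL']].
      assert (EC : C A = cos phi * (cos phi * C A + sin phi * S A)
                         - sin phi * (cos phi * S A - sin phi * C A)).
      { transitivity (C A * (sin phi * sin phi + cos phi * cos phi));
        [rewrite Hsc; ring | ring]. }
      assert (ES : S A = sin phi * (cos phi * C A + sin phi * S A)
                         + cos phi * (cos phi * S A - sin phi * C A)).
      { transitivity (S A * (sin phi * sin phi + cos phi * cos phi));
        [rewrite Hsc; ring | ring]. }
      rewrite g0 in EC, ES.
      set (h := cos phi * C A + sin phi * S A) in *.
      rewrite HL'. f_equal; match goal with |- ?l = ?r => change (@eq R l r) end.
      * rewrite EC, Hx. field. exact hne.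
      * rewrite ES, Hy. field. exact hne.
  - intros L A HL E k k'. rewrite HG in E. injection E as E1 E2.
    unfold clothoid_x, clothoid_y, k, k'.
    rewrite subst_c by exact HL. rewrite subst_s by exact HL.
    fold (C A) (S A).
    split; [|split].
    + unfold dx in E1. lra.
    + unfold dy in E2. lra.
    + unfold dth. field. lra.
Qed.
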